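(* Let $\mu>1$, $\gamma=\mu\gamma_1^N$, $0<\alpha<1/4$, $\rho_k=4k^\alpha$. Define, for $z\in\widehat{\mathbb{R}}^N$, $$R(z)=\widetilde G_N(z)+\tfrac14-(z_0+1)^2-\tfrac12\sum_{k=1}^{N-1}\nu_{k,N}|z_k|^2.$$ There exist constants $A_9<\infty$ and $\delta_0>0$ such that for all $N\ge3$, all $0<\delta<\delta_0$ and all $z\in C_\delta(I_-)$, $|R(z)|\le A_9\delta^3$, where $C_\delta(I_-)=\{z\in\widehat{\mathbb{R}}^N:|z_0+1|\le\delta/\sqrt2,\ |z_k|\le\delta r_{k,N}/\sqrt{\nu_{k,N}}\ \text{for }1\le k\le N-1\}$.
   Context: Indices modulo $N$; $F_{\gamma,N}(x)=\sum_{i=0}^{N-1}(\tfrac14x_i^4-\tfrac12x_i^2)+\tfrac\gamma4\sum_{i=0}^{N-1}(x_i-x_{i+1})^2$; $\gamma_1^N=\frac1{2\sin^2(\pi/N)}$; $G_N=N^{-1}F_{\gamma,N}$; $\lambda_{k,N}=-1+2\gamma\sin^2(k\pi/N)$ and $\nu_{k,N}=\lambda_{k,N}+3$ (eigenvalues of $\nabla^2F_{\gamma,N}$ at $I_\pm=\pm(1,\dots,1)$; $\nu_{0,N}=2$). $\omega=e^{2\pi i/N}$; $\widehat{\mathbb{R}}^N=\{z\in\mathbb{C}^N:z_k=\overline{z_{N-k}}\}$; $x_j(Nz)=\sum_k\omega^{jk}z_k$; $\widetilde G_N(z)=G_N(x(Nz))$; in these coordinates $I_-$ corresponds to $z=(-1,0,\dots,0)$.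 $r_{k,N}=r_{N-k,N}=\rho_k$ for $1\le k\le\lfloor N/2\rfloor$. *)

(* Defs.v *)
From Stdlib Require Export Reals Lra Lia.
Open Scope R_scope.

Fixpoint rsum (n : nat) (f : nat -> R) : R :=
  match n with
  | O => 0
  | S m => rsum m f + f m
  end.

Definition gamma1 (N : nat) : R := / (2 * (sin (PI / INR N)) ^ 2).

Definition F (gamma : R) (N : nat) (x : nat -> R) : R :=
  rsum N (fun i => / 4 * x i ^ 4 - / 2 * x i ^ 2)
  + gamma / 4 * rsum N (fun i => (x i - x ((i + 1) mod N)%nat) ^ 2).

Definition G (gamma : R) (N : nat) (x : nat -> R) : R := / INR N * F gamma N x.

Definition lam (gamma : R) (k N : nat) : R := -1 + 2 * gamma * (sin (INR k * PI / INR N)) ^ 2.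
Definition nu (gamma : R) (k N : nat) : R := lam gamma k N + 3.

(* A complex vector z in C^N is represented by its real parts a and imaginary
   parts b (z_k = a k + i b k, for 0 <= k < N). Membership in widehat R^N: *)
Definition hatR (N : nat) (a b : nat -> R) : Prop :=
  b 0%nat = 0 /\
  forall k, (1 <= k <= N - 1)%nat -> a k = a (N - k)%nat /\ b k = - b (N - k)%nat.

(* x_j(Nz) = sum_k omega^{jk} z_k, omega = e^{2 pi i/N}; its real part
   (it is real when z is in hatR). *)
Definition xofz (N : nat) (a b : nat -> R) (j : nat) : R :=
  rsum N (fun k => a k * cos (2 * PI * INR (j * k) / INR N)
                 - b k * sin (2 * PI * INR (j * k) / INR N)).

Definition Gt (gamma : R) (N : nat) (a b : nat -> R) : R := G gamma N (xofz N a b).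

Definition cabs2 (a b : nat -> R) (k : nat) : R := a k ^ 2 + b k ^ 2.

(* rho_k = 4 k^alpha; r_{k,N} = r_{N-k,N} = rho_k for 1 <= k <= floor(N/2) *)
Definition rho (alpha : R) (k : nat) : R := 4 * Rpower (INR k) alpha.
Definition rr (alpha : R) (k N : nat) : R := rho alpha (Nat.min k (N - k)).

Definition Rem (gamma : R) (N : nat) (a b : nat -> R) : R :=
  Gt gamma N a b + / 4 - (a 0%nat + 1) ^ 2
  - / 2 * rsum N (fun k => if (k =? 0)%nat then 0 else nu gamma k N * cabs2 a b k).

Definition Cdelta (gamma alpha delta : R) (N : nat) (a b : nat -> R) : Prop :=
  hatR N a b /\
  Rabs (a 0%nat + 1) <= delta / sqrt 2 /\
  forall k, (1 <= k <= N - 1)%nat ->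
    sqrt (cabs2 a b k) <= delta * rr alpha k N / sqrt (nu gamma k N).

(* Main.v *)
Require Import Defs.
From Stdlib Require Import Reals Lra Lia Psatz.
Open Scope R_scope.

Lemma rsum_ext n f g : (forall k, (k < n)%nat -> f k = g k) -> rsum n f = rsum n g.
Proof. induction n; simpl; intros H; [reflexivity|]. rewrite IHn by (intros; apply H; lia). rewrite H by lia. reflexivity. Qed.

Lemma rsum_plus n f g : rsum n (fun k => f k + g k) = rsum n f + rsum n g.
Proof. induction n; simpl; [lra|]. rewrite IHn; lra. Qed.

Lemma rsum_minus n f g : rsum n (fun k => f k - g k) = rsum n f - rsum n g.
Proof. induction n; simpl; [lra|]. rewrite IHn; lra. Qed.

Lemma rsum_scal n c f : rsum n (fun k => c * f k) = c * rsum n f.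
Proof. induction n; simpl; [lra|]. rewrite IHn; lra. Qed.

Lemma rsum_const0 n : rsum n (fun _ => 0) = 0.
Proof. induction n; simpl; [lra|]. rewrite IHn; lra. Qed.

Lemma rsum_const n c : rsum n (fun _ => c) = INR n * c.
Proof. induction n; simpl rsum; [simpl; lra|]. rewrite IHn, S_INR; lra. Qed.

Lemma rsum_le n f g : (forall k, (k < n)%nat -> f k <= g k) -> rsum n f <= rsum n g.
Proof. induction n; simpl; intros H; [lra|]. assert (f n <= g n) by (apply H; lia).
  assert (rsum n f <= rsum n g) by (apply IHn; intros; apply H; lia). lra. Qed.

Lemma rsum_nonneg n f : (forall k, (k < n)%nat -> 0 <= f k) -> 0 <= rsum n f.
Proof. intros H. rewrite <- (rsum_const0 n). apply rsum_le; auto. Qed.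

Lemma rsum_abs n f : Rabs (rsum n f) <= rsum n (fun k => Rabs (f k)).
Proof. induction n; simpl. rewrite Rabs_R0; lra.
  eapply Rle_trans; [apply Rabs_triang|]. lra. Qed.

Lemma rsum_swap n m (f : nat -> nat -> R) :
  rsum n (fun i => rsum m (fun j => f i j)) = rsum m (fun j => rsum n (fun i => f i j)).
Proof. induction n; simpl. symmetry; apply rsum_const0.
  rewrite IHn, <- rsum_plus. reflexivity. Qed.

Lemma rsum_mult n m f g : rsum n f * rsum m g = rsum n (fun i => rsum m (fun j => f i * g j)).
Proof. induction n; simpl. lra.
  rewrite Rmult_plus_distr_r, IHn, <- rsum_scal. reflexivity. Qed.

Lemma rsum_shift n f : rsum (S n) f = f 0%nat + rsum n (fun k => f (S k)).
Proof. induction n; simpl; [lra|]. simpl in IHn. rewrite IHn. lra. Qed.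

Lemma rsum_rev n f : rsum n f = rsum n (fun k => f (n - 1 - k)%nat).
Proof. induction n; [reflexivity|].
  rewrite (rsum_shift n (fun k => f (S n - 1 - k)%nat)).
  change (rsum (S n) f) with (rsum n f + f n). rewrite IHn.
  replace (S n - 1 - 0)%nat with n by lia. rewrite Rplus_comm. f_equal.
  apply rsum_ext; intros. f_equal. lia. Qed.

Lemma rsum_telescope n g : rsum n (fun k => g (S k) - g k) = g n - g 0%nat.
Proof. induction n; simpl; [lra|]. rewrite IHn; lra. Qed.

Lemma rsum_single0 n c : (1 <= n)%nat -> rsum n (fun k => if (k =? 0)%nat then c else 0) = c.
Proof. intros H. destruct n; [lia|]. rewrite rsum_shift. simpl.
  rewrite rsum_const0. lra. Qed.

Lemma rsum_split0 n f : (1 <= n)%nat -> rsum n f = f 0%nat + rsum n (fun k => if (k =? 0)%nat then 0 else f k).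
Proof. intros H. destruct n; [lia|]. rewrite !rsum_shift. simpl. lra. Qed.

Lemma rsum_delta n k (c : nat -> R) : (k < n)%nat ->
  rsum n (fun l => if (k =? l)%nat then c l else 0) = c k.
Proof. induction n; intros H; [lia|]. simpl.
  destruct (Nat.eq_dec k n) as [->|Hne].
  - rewrite Nat.eqb_refl. rewrite (rsum_ext _ _ (fun _ => 0)). rewrite rsum_const0; lra.
    intros l Hl. destruct (Nat.eqb_spec n l); [lia|auto].
  - rewrite IHn by lia. destruct (Nat.eqb_spec k n); [lia|lra]. Qed.

Lemma wcs n (x w : nat -> R) : (forall k, (k < n)%nat -> 0 < w k) ->
  (rsum n x)^2 <= rsum n w * rsum n (fun k => x k ^ 2 / w k).
Proof. induction n; intros H. simpl; lra. cbn [rsum].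
  assert (IH := IHn (fun k Hk => H k ltac:(lia))).
  set (X := rsum n x) in *. set (W := rsum n w) in *. set (T := rsum n (fun k => x k ^ 2 / w k)) in *.
  assert (Hw : 0 < w n) by (apply H; lia).
  assert (HW : 0 <= W) by (apply rsum_nonneg; intros; left; apply H; lia).
  assert (HT : 0 <= T) by (apply rsum_nonneg; intros; apply Rmult_le_pos; [nra|left; apply Rinv_0_lt_compat, H; lia]).
  set (y := x n) . set (v := w n) in *.
  assert (Hk : 2 * X * y <= W * (y^2 / v) + v * T).
  { set (u := y / v). replace y with (u * v) by (unfold u; field; lra).
    replace ((u*v)^2/v) with (u^2*v) by (field; lra).
    assert (0 <= (W * u - X)^2) by apply pow2_ge_0.
    (* 2 X u v <= W u^2 v + v T  <=  v (W u^2 - 2 X u + T) >= 0 ; W(Wu^2 -2Xu + T) = (Wu-X)^2 + WT - X^2 >= 0 *)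
    destruct (Req_dec W 0) as [HW0|HW0].
    - assert (X = 0) by (rewrite HW0 in IH; nra). subst. rewrite H1, HW0. nra.
    - assert (0 < W) by lra. assert (0 <= W * u ^ 2 - 2 * X * u + T).
      { apply (Rmult_le_reg_l W); [lra|]. nra. }
      nra. }
  replace ((X + y) ^ 2) with (X^2 + 2*X*y + y^2) by ring.
  assert (y ^ 2 = v * (y^2/v)) by (field; lra).
  nra.
Qed.

Lemma geom_sum n r : r <> 1 -> rsum n (fun k => r ^ k) = (1 - r ^ n) / (1 - r).
Proof. intros Hr. induction n; simpl. field. intro; apply Hr; lra.
  rewrite IHn. field. intro; apply Hr; lra. Qed.

Lemma geom_bound n r : 0 <= r < 1 -> rsum n (fun k => r ^ k) <= / (1 - r).
Proof. intros Hr. rewrite geom_sum by lra. unfold Rdiv. rewrite Rmult_comm.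
  rewrite <- (Rmult_1_r (/ (1 - r))) at 2. apply Rmult_le_compat_l.
  left; apply Rinv_0_lt_compat; lra. assert (0 <= r^n) by (apply pow_le; lra). lra. Qed.

Definition th (N j k : nat) : R := 2 * PI * INR (j * k) / INR N.

Definition yofz (N : nat) (a b : nat -> R) (j : nat) : R :=
  rsum N (fun k => a k * sin (th N j k) + b k * cos (th N j k)).

Lemma xofz_th N a b j : xofz N a b j = rsum N (fun k => a k * cos (th N j k) - b k * sin (th N j k)).
Proof. reflexivity. Qed.

Lemma sin_per_int x p : sin (x + 2 * PI * INR p) = sin x.
Proof. rewrite <- (sin_period x p). f_equal; ring. Qed.
Lemma cos_per_int x p : cos (x + 2 * PI * INR p) = cos x.
Proof. rewrite <- (cos_period x p). f_equal; ring. Qed.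

Lemma orth_p N p : (0 < p < N)%nat ->
  rsum N (fun j => cos (INR j * (2 * PI * INR p / INR N))) = 0 /\
  rsum N (fun j => sin (INR j * (2 * PI * INR p / INR N))) = 0.
Proof.
  intros Hp. set (t := 2 * PI * INR p / INR N).
  assert (HN : 0 < INR N) by (apply lt_0_INR; lia).
  assert (Hs : sin (t / 2) <> 0).
  { assert (0 < t/2 < PI).
    { unfold t. assert (0 < INR p) by (apply lt_0_INR; lia). assert (INR p < INR N) by (apply lt_INR; lia).
      assert (0 < PI) by apply PI_RGT_0. split.
      - apply Rmult_lt_0_compat; [|lra]. unfold Rdiv. apply Rmult_lt_0_compat; [nra|]. apply Rinv_0_lt_compat; lra.
      - replace (2 * PI * INR p / INR N / 2) with (PI * (INR p / INR N)) by (field; lra).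
        assert (INR p / INR N < 1). { apply (Rmult_lt_reg_r (INR N)); [lra|]. unfold Rdiv. rewrite Rmult_assoc, Rinv_l; lra. }
        nra. }
    apply Rgt_not_eq. apply sin_gt_0; lra. }
  assert (HNt : INR N * t = 2 * PI * INR p) by (unfold t; field; lra).
  split.
  - apply (Rmult_eq_reg_l (2 * sin (t/2))); [|lra]. rewrite Rmult_0_r, <- rsum_scal.
    rewrite (rsum_ext _ _ (fun j => sin (INR (S j) * t - t/2) - sin (INR j * t - t/2))).
    + rewrite (rsum_telescope N (fun j => sin (INR j * t - t/2))). simpl INR.
      replace (INR N * t - t/2) with (- (t/2) + 2 * PI * INR p) by lra.
      rewrite sin_per_int. replace (0 * t - t/2) with (-(t/2)) by ring. ring.
    + intros j _. rewrite S_INR.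
      replace ((INR j + 1) * t - t/2) with (INR j * t + t/2) by field.
      rewrite sin_plus, sin_minus. ring.
  - apply (Rmult_eq_reg_l (2 * sin (t/2))); [|lra]. rewrite Rmult_0_r, <- rsum_scal.
    rewrite (rsum_ext _ _ (fun j => - (cos (INR (S j) * t - t/2) - cos (INR j * t - t/2)))).
    + rewrite (rsum_ext _ _ (fun j => (-1) * (cos (INR (S j) * t - t/2) - cos (INR j * t - t/2)))) by (intros; ring).
      rewrite rsum_scal, (rsum_telescope N (fun j => cos (INR j * t - t/2))). simpl INR.
      replace (INR N * t - t/2) with (- (t/2) + 2 * PI * INR p) by lra.
      rewrite cos_per_int. replace (0 * t - t/2) with (-(t/2)) by ring. ring.
    + intros j _. rewrite S_INR.
      replace ((INR j + 1) * t - t/2) with (INR j * t + t/2) by field.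
      rewrite cos_plus, cos_minus. ring.
Qed.

Lemma th_diff N j k l : (l <= k)%nat -> (0 < N)%nat ->
  th N j k - th N j l = INR j * (2 * PI * INR (k - l) / INR N).
Proof. intros H HN. unfold th. rewrite !mult_INR, minus_INR by lia.
  assert (0 < INR N) by (apply lt_0_INR; lia). field; lra. Qed.

Lemma orth N k l : (k < N)%nat -> (l < N)%nat ->
  rsum N (fun j => cos (th N j k - th N j l)) = (if (k =? l)%nat then INR N else 0) /\
  rsum N (fun j => sin (th N j k - th N j l)) = 0.
Proof.
  intros Hk Hl. destruct (Nat.eqb_spec k l) as [->|Hne].
  - rewrite (rsum_ext _ _ (fun _ => 1)), (rsum_ext _ (fun j => sin _) (fun _ => 0)).
    + rewrite rsum_const, rsum_const0. split; ring.
    + intros; rewrite Rminus_diag; apply sin_0.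
    + intros; rewrite Rminus_diag; apply cos_0.
  - destruct (Nat.lt_ge_cases l k) as [Hlt|Hge].
    + destruct (orth_p N (k - l) ltac:(lia)) as [A B].
      split; [rewrite <- A|rewrite <- B]; apply rsum_ext; intros; rewrite th_diff by lia; reflexivity.
    + destruct (orth_p N (l - k) ltac:(lia)) as [A B].
      split.
      * rewrite <- A; apply rsum_ext; intros. rewrite <- th_diff by lia.
        rewrite <- cos_neg. f_equal; ring.
      * rewrite (rsum_ext _ _ (fun j => (-1) * sin (INR j * (2 * PI * INR (l - k) / INR N)))).
        rewrite rsum_scal, B; ring.
        intros j Hj. rewrite <- th_diff by lia. replace (th N j k - th N j l) with (-(th N j l - th N j k)) by ring. rewrite sin_neg. ring.
Qed.

Lemma parseval_c N a b :
  rsum N (fun j => xofz N a b j ^ 2 + yofz N a b j ^ 2) = INR N * rsum N (cabs2 a b).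
Proof.
  assert (Hpt : forall j, xofz N a b j ^ 2 + yofz N a b j ^ 2 =
     rsum N (fun k => rsum N (fun l =>
        (a k * a l + b k * b l) * cos (th N j k - th N j l)
      + (a k * b l - b k * a l) * sin (th N j k - th N j l)))).
  { intros j. rewrite xofz_th. unfold yofz. rewrite <- !Rsqr_pow2. unfold Rsqr.
    rewrite !rsum_mult, <- rsum_plus. apply rsum_ext; intros k _.
    rewrite <- rsum_plus. apply rsum_ext; intros l _.
    rewrite cos_minus, sin_minus. ring. }
  rewrite (rsum_ext _ _ _ (fun j _ => Hpt j)).
  rewrite rsum_swap. rewrite <- rsum_scal. apply rsum_ext; intros k Hk.
  rewrite rsum_swap.
  rewrite (rsum_ext _ _ (fun l => if (k =? l)%nat then INR N * cabs2 a b l else 0)).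
  - rewrite rsum_delta by lia. reflexivity.
  - intros l Hl. rewrite rsum_plus.
    rewrite (rsum_scal N (a k * a l + b k * b l) (fun j => cos (th N j k - th N j l))).
    rewrite (rsum_scal N (a k * b l - b k * a l) (fun j => sin (th N j k - th N j l))).
    destruct (orth N k l Hk Hl) as [A B]. rewrite A, B.
    destruct (Nat.eqb_spec k l) as [->|]; unfold cabs2; ring.
Qed.

Lemma th_0 N j : th N j 0 = 0.
Proof. unfold th. rewrite Nat.mul_0_r. simpl. unfold Rdiv. ring. Qed.

Lemma th_refl N j k : (k <= N)%nat -> (0 < N)%nat -> th N j (N - k) = 2 * PI * INR j - th N j k.
Proof. intros H HN. unfold th. rewrite !mult_INR, minus_INR by lia.
  assert (0 < INR N) by (apply lt_0_INR; lia). field; lra. Qed.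

Lemma sin_refl x j : sin (2 * PI * INR j - x) = - sin x.
Proof. replace (2 * PI * INR j - x) with (- x + 2 * PI * INR j) by ring. rewrite sin_per_int, sin_neg; ring. Qed.
Lemma cos_refl x j : cos (2 * PI * INR j - x) = cos x.
Proof. replace (2 * PI * INR j - x) with (- x + 2 * PI * INR j) by ring. rewrite cos_per_int, cos_neg; ring. Qed.

Lemma yofz_0 N a b j : (1 <= N)%nat -> hatR N a b -> yofz N a b j = 0.
Proof.
  intros HN [Hb0 Hs]. unfold yofz. destruct N as [|M]; [lia|].
  rewrite rsum_shift. rewrite th_0, sin_0, cos_0, Hb0.
  set (h := fun k => a k * sin (th (S M) j k) + b k * cos (th (S M) j k)).
  change (rsum M (fun k => h (S k))) with (rsum M (fun k => h (S k))).
  assert (E : rsum M (fun k => h (S k)) = - rsum M (fun k => h (S k))).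
  { rewrite (rsum_rev M (fun k => h (S k))) at 1. rewrite (rsum_ext _ _ (fun k => (-1) * h (S k))).
    - rewrite rsum_scal; ring.
    - intros i Hi. replace (S (M - 1 - i)) with (S M - S i)%nat by lia.
      destruct (Hs (S i) ltac:(lia)) as [Ha' Hb']. unfold h.
      rewrite th_refl by lia. rewrite sin_refl, cos_refl. rewrite <- Ha'.
      rewrite Hb'. ring_simplify. 
      replace (S M - (S M - S i))%nat with (S i) by lia. ring. }
  change (a 0%nat * 0 + 0 * 1 + rsum M (fun k => h (S k)) = 0). lra.
Qed.

Lemma parseval N a b : (1 <= N)%nat -> hatR N a b ->
  rsum N (fun j => xofz N a b j ^ 2) = INR N * rsum N (cabs2 a b).
Proof. intros HN H. rewrite <- parseval_c. apply rsum_ext; intros. rewrite yofz_0 by auto. ring. Qed.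

Lemma parseval_le N a b :
  rsum N (fun j => xofz N a b j ^ 2) <= INR N * rsum N (cabs2 a b).
Proof. rewrite <- parseval_c. apply rsum_le; intros. assert (0 <= yofz N a b k ^ 2) by apply pow2_ge_0. lra. Qed.

Lemma xofz_sup N a b j : Rabs (xofz N a b j) <= rsum N (fun k => sqrt (cabs2 a b k)).
Proof.
  rewrite xofz_th. eapply Rle_trans; [apply rsum_abs|]. apply rsum_le; intros k _.
  rewrite <- sqrt_Rsqr_abs. apply sqrt_le_1_alt.
  unfold Rsqr, cabs2. set (c := cos (th N j k)). set (s := sin (th N j k)).
  assert (Hcs : s * s + c * c = 1) by (generalize (sin2_cos2 (th N j k)); unfold Rsqr; fold c s; lra).
  assert (0 <= (a k * s + b k * c)^2) by apply pow2_ge_0. nra.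
Qed.

Lemma xofz_minus N a1 b1 a2 b2 j :
  xofz N (fun k => a1 k - a2 k) (fun k => b1 k - b2 k) j = xofz N a1 b1 j - xofz N a2 b2 j.
Proof. rewrite !xofz_th, <- rsum_minus. apply rsum_ext; intros; ring. Qed.

Lemma xofz_ext N a1 b1 a2 b2 j : (forall k, (k < N)%nat -> a1 k = a2 k /\ b1 k = b2 k) ->
  xofz N a1 b1 j = xofz N a2 b2 j.
Proof. intros H. rewrite !xofz_th. apply rsum_ext; intros k Hk. destruct (H k Hk) as [-> ->]. reflexivity. Qed.

Definition ap (a : nat -> R) (k : nat) : R := if (k =? 0)%nat then a 0%nat + 1 else a k.

Lemma xofz_ap N a b j : (1 <= N)%nat -> xofz N (ap a) b j = xofz N a b j + 1.
Proof.
  intros HN. enough (xofz N (ap a) b j - xofz N a b j = 1) by lra.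
  rewrite !xofz_th, <- rsum_minus.
  rewrite (rsum_ext _ _ (fun k => if (k =? 0)%nat then 1 else 0)).
  - apply rsum_single0; auto.
  - intros k _. unfold ap. destruct (Nat.eqb_spec k 0) as [->|]; [|ring].
    rewrite th_0, cos_0, sin_0. ring.
Qed.

Lemma hatR_ap N a b : hatR N a b -> hatR N (ap a) b.
Proof. intros [H0 H]. split; auto. intros k Hk. destruct (H k Hk) as [A B]. unfold ap.
  destruct (Nat.eqb_spec k 0); [lia|]. destruct (Nat.eqb_spec (N - k) 0); [lia|]. auto. Qed.

Definition phi (N k : nat) : R := 2 * PI * INR k / INR N.
Definition ad (N : nat) (a b : nat -> R) (k : nat) : R := a k * (1 - cos (phi N k)) + b k * sin (phi N k).
Definition bd (N : nat) (a b : nat -> R) (k : nat) : R := b k * (1 - cos (phi N k)) - a k * sin (phi N k).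

Lemma th_S N j k : (0 < N)%nat -> th N (S j) k = th N j k + phi N k.
Proof. intros HN. unfold th, phi. rewrite !mult_INR, S_INR.
  assert (0 < INR N) by (apply lt_0_INR; lia). field; lra. Qed.

Lemma xofz_N N a b : (0 < N)%nat -> xofz N a b N = xofz N a b 0.
Proof. intros HN. rewrite !xofz_th. apply rsum_ext; intros k _.
  assert (E : th N N k = 0 + 2 * PI * INR k).
  { unfold th. rewrite mult_INR. assert (0 < INR N) by (apply lt_0_INR; lia). field; lra. }
  rewrite E, sin_per_int, cos_per_int. unfold th. rewrite Nat.mul_0_l. simpl INR. replace (2 * PI * 0 / INR N) with 0 by (unfold Rdiv; ring). reflexivity. Qed.

Lemma xofz_diff N a b i : (i < N)%nat ->
  xofz N a b i - xofz N a b ((i + 1) mod N) = xofz N (ad N a b) (bd N a b) i.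
Proof.
  intros Hi. assert (E : xofz N a b ((i+1) mod N) = xofz N a b (S i)).
  { destruct (Nat.eq_dec (S i) N) as [Heq|Hne].
    - replace (i+1)%nat with N by lia. rewrite Nat.Div0.mod_same. rewrite Heq. symmetry. apply xofz_N; lia.
    - f_equal. rewrite Nat.mod_small; lia. }
  rewrite E. rewrite !xofz_th, <- rsum_minus. apply rsum_ext; intros k _.
  rewrite th_S by lia. rewrite cos_plus, sin_plus. unfold ad, bd. ring.
Qed.

Lemma phi_refl N k : (k <= N)%nat -> (0 < N)%nat -> phi N (N - k) = 2 * PI * INR 1 - phi N k.
Proof. intros. unfold phi. rewrite minus_INR by lia. simpl INR.
  assert (0 < INR N) by (apply lt_0_INR; lia). field; lra. Qed.

Lemma hatR_d N a b : (0 < N)%nat -> hatR N a b -> hatR N (ad N a b) (bd N a b).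
Proof.
  intros HN [H0 H]. split.
  - unfold bd, phi. rewrite H0. simpl INR. replace (2 * PI * 0 / INR N) with 0 by (unfold Rdiv; ring).
    rewrite sin_0. ring.
  - intros k Hk. destruct (H k Hk) as [A B]. unfold ad, bd.
    rewrite (phi_refl N k) by lia. rewrite sin_refl, cos_refl. rewrite A, B. split; ring.
Qed.

Lemma cabs2_d N a b k : (0 < N)%nat ->
  cabs2 (ad N a b) (bd N a b) k = 4 * sin (INR k * PI / INR N) ^ 2 * cabs2 a b k.
Proof.
  intros HN. unfold cabs2, ad, bd.
  assert (E : phi N k = 2 * (INR k * PI / INR N)) by (unfold phi; field; apply not_0_INR; lia).
  rewrite E. set (u := INR k * PI / INR N). rewrite cos_2a_sin, sin_2a.
  assert (Hc := sin2_cos2 u). unfold Rsqr in Hc.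
  transitivity (4 * sin u ^ 2 * ((sin u * sin u + cos u * cos u) * (a k ^ 2 + b k ^ 2))); [ring|].
  rewrite Hc. ring.
Qed.

Lemma rem_eq g N a b : (1 <= N)%nat -> hatR N a b ->
  Rem g N a b = / INR N * rsum N (fun j => - (xofz N a b j + 1) ^ 3 + / 4 * (xofz N a b j + 1) ^ 4).
Proof.
  intros HN H. pose proof H as [Hb0 _].
  assert (HN0 : INR N <> 0) by (apply not_0_INR; lia).
  set (C := rsum N (fun k => if (k =? 0)%nat then 0 else cabs2 a b k)).
  set (Sg := rsum N (fun k => if (k =? 0)%nat then 0 else sin (INR k * PI / INR N) ^ 2 * cabs2 a b k)).
  set (Y := rsum N (fun j => - (xofz N a b j + 1) ^ 3 + / 4 * (xofz N a b j + 1) ^ 4)).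
  assert (E1 : rsum N (fun i => / 4 * xofz N a b i ^ 4 - / 2 * xofz N a b i ^ 2)
              = INR N * (- / 4) + INR N * ((a 0%nat + 1) ^ 2 + C) + Y).
  { rewrite (rsum_ext _ _ (fun i => (- / 4 + (xofz N (ap a) b i) ^ 2) + (- (xofz N a b i + 1) ^ 3 + / 4 * (xofz N a b i + 1) ^ 4))).
    - rewrite !rsum_plus, rsum_const. fold Y.
      enough (rsum N (fun i => xofz N (ap a) b i ^ 2) = INR N * ((a 0%nat + 1) ^ 2 + C)) by (assert (rsum N (fun k => - (xofz N a b k + 1) ^ 3) + rsum N (fun k => / 4 * (xofz N a b k + 1) ^ 4) = Y) by (unfold Y; rewrite rsum_plus; reflexivity); lra).
      rewrite parseval by (auto using hatR_ap). f_equal.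
      rewrite rsum_split0 by auto. unfold C. f_equal.
      + unfold cabs2, ap. simpl. rewrite Hb0. ring.
      + apply rsum_ext; intros k _. unfold cabs2, ap. destruct (Nat.eqb_spec k 0); reflexivity.
    - intros i _. rewrite xofz_ap by auto. field. }
  assert (E2 : rsum N (fun i => (xofz N a b i - xofz N a b ((i + 1) mod N)) ^ 2) = INR N * (4 * Sg)).
  { rewrite (rsum_ext _ _ (fun i => xofz N (ad N a b) (bd N a b) i ^ 2)).
    - rewrite parseval by (auto using hatR_d with arith). f_equal.
      rewrite rsum_split0 by auto. rewrite cabs2_d by lia. simpl INR.
      replace (0 * PI / INR N) with 0 by (unfold Rdiv; ring). rewrite sin_0.
      unfold Sg. rewrite <- rsum_scal. replace (4 * 0 ^ 2 * cabs2 a b 0) with 0 by ring. rewrite Rplus_0_l.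
      apply rsum_ext; intros k _. destruct (Nat.eqb_spec k 0). ring. rewrite cabs2_d by lia. ring.
    - intros i Hi. rewrite xofz_diff by auto. reflexivity. }
  assert (E3 : rsum N (fun k => if (k =? 0)%nat then 0 else nu g k N * cabs2 a b k) = 2 * C + 2 * g * Sg).
  { unfold C, Sg. rewrite <- !rsum_scal, <- rsum_plus. apply rsum_ext; intros k _.
    destruct (Nat.eqb_spec k 0). ring. unfold nu, lam. ring. }
  unfold Rem, Gt, G, F. rewrite E1, E2, E3. fold Y. field. auto.
Qed.

Lemma sin_lb3 x : 0 <= x -> x <= PI -> x - x^3/6 <= sin x.
Proof. intros H1 H2. destruct (SIN x H1 H2) as [H _]. eapply Rle_trans; [|exact H].
  unfold sin_lb, sin_approx, sin_term. cbn [sum_f_R0]. rewrite !INR_IZR_INZ.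
  cbn -[pow Rdiv Rmult Rplus Ropp IZR].
  assert (PI <= 4) by apply PI_4.
  assert (0 <= x^2 <= 16) by (split; nra).
  assert (0 <= x^5 / 120 - x^7/5040).
  { replace (x^5 / 120 - x^7/5040) with (x^5 * (42 - x^2)/5040) by field.
    apply Rmult_le_pos; [|lra]. apply Rmult_le_pos; [apply pow_le; lra|lra]. }
  simpl pow. lra.
Qed.

Lemma nu_lb mu N k : 1 < mu -> (3 <= N)%nat -> (1 <= k <= N - 1)%nat ->
  INR (Nat.min k (N - k)) ^ 2 / 9 <= nu (mu * gamma1 N) k N.
Proof.
  intros Hmu HN Hk. set (d := Nat.min k (N - k)).
  assert (Hd1 : (1 <= d)%nat) by (unfold d; lia).
  assert (Hd2 : (2 * d <= N)%nat) by (unfold d; lia).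
  assert (HNr : 0 < INR N) by (apply lt_0_INR; lia).
  assert (HPI := PI_RGT_0). assert (HPI4 := PI_4).
  assert (Hdr : 1 <= INR d) by (apply (le_INR 1); lia).
  assert (Hd2r : 2 * INR d <= INR N) by (change 2 with (INR 2); rewrite <- mult_INR; apply le_INR; lia).
  assert (Es : sin (INR k * PI / INR N) = sin (INR d * PI / INR N)).
  { unfold d. destruct (Nat.le_ge_cases k (N - k)).
    - rewrite Nat.min_l by lia. reflexivity.
    - rewrite Nat.min_r by lia. rewrite minus_INR by lia.
      replace ((INR N - INR k) * PI / INR N) with (PI - INR k * PI / INR N) by (field; lra).
      rewrite sin_PI_x. reflexivity. }
  set (x := INR d * PI / INR N).
  assert (Hx0 : 0 < x) by (unfold x; apply Rdiv_lt_0_compat; nra).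
  assert (Hx1 : x <= PI / 2).
  { unfold x. apply (Rmult_le_reg_r (2 * INR N)); [lra|]. field_simplify; [|lra]. nra. }
  set (s1 := sin (PI / INR N)).
  assert (Hs1 : 0 < s1).
  { unfold s1. apply sin_gt_0. apply Rdiv_lt_0_compat; lra.
    apply (Rmult_lt_reg_r (INR N)); [lra|]. field_simplify; [|lra].
    assert (H3 := le_INR 3 N HN). replace (INR 3) with 3 in H3 by (simpl; lra). nra. }
  assert (Hs1x : s1 < PI / INR N) by (apply sin_lt_x; apply Rdiv_lt_0_compat; lra).
  assert (Hsx : x / 3 <= sin x).
  { eapply Rle_trans; [|apply sin_lb3; lra].
    assert (x ^ 2 <= 4) by nra. nra. }
  assert (Hxs : INR d * s1 <= x) by (unfold x; replace (INR d * PI / INR N) with (INR d * (PI / INR N)) by (field; lra); nra).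
  assert (Hsd : INR d * s1 / 3 <= sin x) by lra.
  unfold nu, lam, gamma1. rewrite Es. fold x.
  replace (-1 + 2 * (mu * / (2 * sin (PI / INR N) ^ 2)) * sin x ^ 2 + 3)
     with (2 + mu * (sin x / s1) ^ 2) by (unfold s1; field; fold s1; lra).
  assert (INR d / 3 <= sin x / s1).
  { apply (Rmult_le_reg_r s1); [lra|]. field_simplify; lra. }
  assert (0 <= INR d / 3) by lra.
  assert ((INR d/3)^2 <= (sin x / s1)^2) by (apply pow_incr; lra).
  assert ((sin x / s1)^2 <= mu * (sin x / s1)^2).
  { assert (0 <= (sin x / s1)^2) by apply pow2_ge_0. nra. }
  replace (INR d ^ 2 / 9) with ((INR d / 3)^2) by field. lra.
Qed.

Definition dd (N k : nat) : nat := Nat.min k (N - k).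
Definition tr (N m : nat) (f : nat -> R) (k : nat) : R := if (dd N k <? 2 ^ m)%nat then f k else 0.
Definition Sm N a b m j := xofz N (tr N m (ap a)) (tr N m b) j.
Definition nz a b k := sqrt (cabs2 (ap a) b k).
Definition Pm N a b m := rsum N (fun k => if (dd N k <? 2 ^ m)%nat then nz a b k else 0).
Definition ind N m k := ((dd N k <? 2 ^ (S m))%nat && negb (dd N k <? 2 ^ m)%nat)%bool.
Definition Bm N a b m := rsum N (fun k => if ind N m k then nz a b k else 0).
Definition Em N a b m := rsum N (fun k => if ind N m k then cabs2 (ap a) b k else 0).

Lemma Sm_sup N a b m j : Rabs (Sm N a b m j) <= Pm N a b m.
Proof. unfold Sm, Pm. eapply Rle_trans; [apply xofz_sup|]. apply rsum_le; intros k _.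
  unfold nz, cabs2, tr. destruct (dd N k <? 2 ^ m)%nat; [lra|].
  replace (0 ^ 2 + 0 ^ 2) with 0 by ring. rewrite sqrt_0; lra. Qed.

Lemma pow2S m : (2 ^ S m = 2 * 2 ^ m)%nat.
Proof. simpl. lia. Qed.

Lemma Sm_diff_sq N a b m :
  rsum N (fun j => (Sm N a b (S m) j - Sm N a b m j) ^ 2) <= INR N * Em N a b m.
Proof.
  unfold Sm. rewrite (rsum_ext _ _ (fun j => xofz N (fun k => tr N (S m) (ap a) k - tr N m (ap a) k)
                                           (fun k => tr N (S m) b k - tr N m b k) j ^ 2)).
  2: { intros; rewrite xofz_minus; reflexivity. }
  eapply Rle_trans; [apply parseval_le|]. unfold Em. right. f_equal. apply rsum_ext; intros k _.
  unfold tr, ind, cabs2. pose proof (pow2S m).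
  destruct (Nat.ltb_spec (dd N k) (2 ^ S m)), (Nat.ltb_spec (dd N k) (2 ^ m)); simpl; try ring. lia.
Qed.

Lemma Pm_S N a b m : Pm N a b (S m) = Pm N a b m + Bm N a b m.
Proof. unfold Pm, Bm. rewrite <- rsum_plus. apply rsum_ext; intros k _. unfold ind.
  pose proof (pow2S m).
  destruct (Nat.ltb_spec (dd N k) (2 ^ S m)), (Nat.ltb_spec (dd N k) (2 ^ m)); simpl; try ring. lia. Qed.

Lemma Sm_N N a b j : Sm N a b N j = xofz N (ap a) b j.
Proof. unfold Sm. apply xofz_ext. intros k Hk. unfold tr.
  assert (H := Nat.pow_gt_lin_r 2 N ltac:(lia)).
  destruct (Nat.ltb_spec (dd N k) (2 ^ N)); [auto|]. unfold dd in *. lia. Qed.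

Lemma Pm_0 N a b : (1 <= N)%nat -> Pm N a b 0 = nz a b 0.
Proof. intros HN. unfold Pm. rewrite rsum_split0 by auto. simpl (2^0)%nat.
  replace (dd N 0 <? 1)%nat with true by (unfold dd; simpl; reflexivity).
  rewrite (rsum_ext _ _ (fun _ => 0)). rewrite rsum_const0; ring.
  intros k Hk. destruct (Nat.eqb_spec k 0); [auto|].
  destruct (Nat.ltb_spec (dd N k) 1); [|auto]. unfold dd in *. lia. Qed.

Definition indb (b : bool) : R := if b then 1 else 0.

Lemma cnt1 n B : rsum n (fun k => indb (k <? B)%nat) <= INR B.
Proof. assert (forall n, rsum n (fun k => indb (k <? B)%nat) <= INR (Nat.min n B)).
  { induction n0; cbn [rsum]. simpl; lra. unfold indb at 2. destruct (Nat.ltb_spec n0 B).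
    - replace (Nat.min (S n0) B) with (S (Nat.min n0 B)) by lia. rewrite S_INR. lra.
    - replace (Nat.min (S n0) B) with (Nat.min n0 B) by lia. lra. }
  eapply Rle_trans; [apply H|]. apply le_INR; lia. Qed.

Lemma cnt_dd N B : rsum N (fun k => indb (dd N k <? B)%nat) <= 2 * INR B.
Proof.
  eapply Rle_trans with (rsum N (fun k => indb (k <? B)%nat) + rsum N (fun k => indb (N - k <? B)%nat)).
  { rewrite <- rsum_plus. apply rsum_le; intros k _. unfold indb, dd.
    destruct (Nat.ltb_spec (Nat.min k (N - k)) B), (Nat.ltb_spec k B), (Nat.ltb_spec (N - k) B); lia || lra. }
  assert (rsum N (fun k => indb (N - k <? B)%nat) <= INR B).
  { rewrite rsum_rev. eapply Rle_trans; [|apply (cnt1 N B)]. apply rsum_le; intros k Hk.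
    replace (N - (N - 1 - k))%nat with (S k) by lia. unfold indb.
    destruct (Nat.ltb_spec (S k) B), (Nat.ltb_spec k B); lia || lra. }
  pose proof (cnt1 N B). lra.
Qed.

Lemma cnt_ind N m : rsum N (fun k => indb (ind N m k)) <= 2 * 2 ^ S m.
Proof. assert (H := cnt_dd N (2 ^ S m)). rewrite pow_INR in H. replace (INR 2) with 2 in H by (simpl; ring).
  eapply Rle_trans; [|exact H].
  apply rsum_le; intros k _. unfold indb, ind. destruct (dd N k <? 2 ^ S m)%nat; simpl; [|lra].
  destruct (dd N k <? 2 ^ m)%nat; simpl; lra. Qed.

Lemma sum_ind_bound N (P : nat -> bool) (v : nat -> R) c :
  (forall k, (k < N)%nat -> P k = true -> v k <= c) -> 0 <= c ->
  rsum N (fun k => if P k then v k else 0) <= c * rsum N (fun k => indb (P k)).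
Proof. intros H Hc. rewrite <- rsum_scal. apply rsum_le; intros k Hk. unfold indb.
  destruct (P k) eqn:E. rewrite Rmult_1_r; auto. lra. Qed.

Lemma q_gt1 alpha : 0 < alpha -> 1 < Rpower 2 alpha.
Proof. intros H. rewrite <- (Rpower_O 2) by lra. apply Rpower_lt; lra. Qed.

Lemma q_pow4 alpha : 0 < alpha < / 4 -> Rpower 2 alpha ^ 4 < 2.
Proof. intros H. rewrite <- Rpower_pow by (unfold Rpower; apply exp_pos).
  rewrite Rpower_mult. rewrite <- (Rpower_1 2) at 2 by lra. apply Rpower_lt; [lra|].
  simpl INR. lra. Qed.

Lemma Rpower_2pow alpha n : Rpower (2 ^ n) alpha = Rpower 2 alpha ^ n.
Proof. rewrite <- (Rpower_pow n 2) by lra. rewrite Rpower_mult, Rmult_comm, <- Rpower_mult.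
  apply Rpower_pow. unfold Rpower; apply exp_pos. Qed.

Lemma pow2_pos m : (1 <= 2 ^ m)%nat.
Proof. assert (H := Nat.pow_nonzero 2 m ltac:(lia)). lia. Qed.

Lemma ind_range N m k : ind N m k = true -> (2 ^ m <= dd N k < 2 ^ S m)%nat.
Proof. unfold ind. intros H. apply andb_prop in H as [H1 H2].
  apply Nat.ltb_lt in H1. apply Bool.negb_true_iff, Nat.ltb_ge in H2. lia. Qed.

Lemma nz_bound mu alpha delta N a b m k : 1 < mu -> 0 < alpha -> (3 <= N)%nat -> 0 < delta ->
  Cdelta (mu * gamma1 N) alpha delta N a b -> (k < N)%nat -> ind N m k = true ->
  nz a b k <= 12 * delta * Rpower 2 alpha ^ S m / 2 ^ m.
Proof.
  intros Hmu Hal HN Hd [Hh [H0 Hk]] HkN Hi.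
  destruct (ind_range N m k Hi) as [Hl Hu]. pose proof (pow2_pos m).
  assert (Hk0 : k <> 0%nat) by (intro; subst; unfold dd in Hl; simpl in Hl; lia).
  assert (Hk1 : (1 <= k <= N - 1)%nat) by lia.
  assert (E : nz a b k = sqrt (cabs2 a b k)).
  { unfold nz, cabs2, ap. apply Nat.eqb_neq in Hk0. rewrite Hk0. reflexivity. }
  rewrite E. eapply Rle_trans; [apply (Hk k Hk1)|].
  set (d := dd N k) in *.
  assert (Hdm : 2 ^ m <= INR d).
  { replace (2 ^ m) with (INR (2 ^ m)) by (rewrite pow_INR; f_equal; simpl; ring). apply le_INR; lia. }
  assert (H2m : 0 < 2 ^ m) by (apply pow_lt; lra).
  assert (Hrp : Rpower (INR d) alpha <= Rpower 2 alpha ^ S m).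
  { rewrite <- Rpower_2pow. apply Rle_Rpower_l; [lra|]. split; [lra|].
    replace (2 ^ S m) with (INR (2 ^ S m)) by (rewrite pow_INR; f_equal; simpl; ring).
    apply le_INR; lia. }
  assert (Hnu := nu_lb mu N k Hmu HN Hk1). fold (dd N k) in Hnu. fold d in Hnu.
  assert (Hsq : INR d / 3 <= sqrt (nu (mu * gamma1 N) k N)).
  { rewrite <- (sqrt_pow2 (INR d / 3)) by lra. apply sqrt_le_1_alt.
    replace ((INR d / 3) ^ 2) with (INR d ^ 2 / 9) by field. exact Hnu. }
  unfold rr, rho. fold (dd N k). fold d.
  assert (Hq : 0 < Rpower 2 alpha ^ S m) by (apply pow_lt; unfold Rpower; apply exp_pos).
  assert (0 <= Rpower (INR d) alpha) by (unfold Rpower; left; apply exp_pos).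
  unfold Rdiv. rewrite Rmult_assoc.
  replace (12 * delta * Rpower 2 alpha ^ S m * / 2 ^ m) with (delta * ((4 * Rpower 2 alpha ^ S m) * / (2^m / 3))) by (field; lra).
  apply Rmult_le_compat_l; [lra|]. apply Rmult_le_compat; [lra| left; apply Rinv_0_lt_compat; lra | lra |].
  apply Rinv_le_contravar; lra.
Qed.

Section Bounds.
Variables (N : nat) (a b : nat -> R) (delta q : R).
Hypothesis Hd : 0 < delta.
Hypothesis Hq : 1 < q.
Hypothesis Hnz : forall m k, (k < N)%nat -> ind N m k = true -> nz a b k <= 12 * delta * q ^ S m / 2 ^ m.
Hypothesis HP0 : Pm N a b 0 <= delta.

Let c m := 12 * delta * q ^ S m / 2 ^ m.
Lemma c_pos m : 0 <= c m.
Proof. unfold c. assert (0 < q ^ S m) by (apply pow_lt; lra). assert (0 < 2 ^ m) by (apply pow_lt; lra).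
  apply Rmult_le_pos; [nra|left; apply Rinv_0_lt_compat; lra]. Qed.

Lemma c_cnt m : c m * (2 * 2 ^ S m) = 48 * delta * q ^ S m.
Proof. unfold c. replace (2 ^ S m) with (2 * 2 ^ m) by (simpl; ring). assert (0 < 2 ^ m) by (apply pow_lt; lra). field; lra. Qed.

Lemma Bm_bound m : Bm N a b m <= 48 * delta * q ^ S m.
Proof. unfold Bm. eapply Rle_trans; [apply (sum_ind_bound N (ind N m) (nz a b) (c m)); [intros k Hk Hi; unfold c; apply Hnz; auto | apply c_pos]|].
  rewrite <- c_cnt. apply Rmult_le_compat_l; [apply c_pos|apply cnt_ind]. Qed.

Lemma Em_bound m : Em N a b m <= 576 * delta ^ 2 * (q ^ S m) ^ 2 / 2 ^ m.
Proof. unfold Em. eapply Rle_trans; [apply (sum_ind_bound N (ind N m) (cabs2 (ap a) b) (c m ^ 2))|].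
  - intros k Hk Hi. assert (H := Hnz m k Hk Hi). unfold nz in H.
    assert (0 <= cabs2 (ap a) b k) by (unfold cabs2; nra).
    rewrite <- (pow2_sqrt (cabs2 (ap a) b k)) by auto. unfold c. apply pow_incr. split; [apply sqrt_pos|exact H].
  - apply pow2_ge_0.
  - eapply Rle_trans; [apply Rmult_le_compat_l; [apply pow2_ge_0|apply cnt_ind]|].
    right. unfold c. simpl pow. assert (0 < 2 ^ m) by (apply pow_lt; lra). field; lra.
Qed.

Definition Dc := 48 * q / (q - 1) + 1.

Lemma Pm_bound m : Pm N a b m <= Dc * delta * q ^ m.
Proof. induction m.
  - simpl. unfold Dc. assert (0 < 48 * q / (q - 1)) by (apply Rdiv_lt_0_compat; lra). nra.
  - rewrite Pm_S. pose proof (Bm_bound m). simpl pow in *.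
    assert (0 < q ^ m) by (apply pow_lt; lra).
    assert (Dc * (q - 1) = 48 * q + (q - 1)) by (unfold Dc; field; lra).
    assert (0 < delta * q ^ m) by nra.
    assert (0 <= (delta * q ^ m) * (q - 1)) by nra. nra.
Qed.

Lemma Pm_nonneg m : 0 <= Pm N a b m.
Proof. apply rsum_nonneg; intros. destruct (dd N k <? 2 ^ m)%nat; [apply sqrt_pos|lra]. Qed.

Definition rho4 := q ^ 4 / 2.
Definition tt := (rho4 + 1) / 2.

Lemma pow_id m : (q ^ S m) ^ 4 / 2 ^ m = q ^ 4 * rho4 ^ m.
Proof. unfold rho4. rewrite <- pow_mult. replace (S m * 4)%nat with (4 + 4 * m)%nat by lia.
  rewrite pow_add, pow_mult. unfold Rdiv. rewrite Rpow_mult_distr, pow_inv. ring. Qed.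

Lemma fm_bound m : rsum N (fun j => (Sm N a b (S m) j ^ 2 - Sm N a b m j ^ 2) ^ 2)
   <= INR N * (2304 * Dc ^ 2 * delta ^ 4 * q ^ 4) * rho4 ^ m.
Proof.
  set (P := Pm N a b (S m) + Pm N a b m).
  assert (HP : P <= 2 * Dc * delta * q ^ S m).
  { unfold P. pose proof (Pm_bound (S m)). pose proof (Pm_bound m).
    assert (Dc * delta * q ^ m <= Dc * delta * q ^ S m).
    { assert (0 < Dc) by (unfold Dc; assert (0 < 48 * q / (q - 1)) by (apply Rdiv_lt_0_compat; lra); lra).
      apply Rmult_le_compat_l; [nra|]. simpl. assert (0 < q ^ m) by (apply pow_lt; lra). nra. }
    lra. }
  assert (HPn : 0 <= P) by (unfold P; pose proof (Pm_nonneg (S m)); pose proof (Pm_nonneg m); lra).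
  eapply Rle_trans with (P ^ 2 * rsum N (fun j => (Sm N a b (S m) j - Sm N a b m j) ^ 2)).
  { rewrite <- rsum_scal. apply rsum_le; intros j _.
    pose proof (Sm_sup N a b (S m) j). pose proof (Sm_sup N a b m j).
    set (x := Sm N a b (S m) j) in *. set (y := Sm N a b m j) in *.
    assert (Rabs (x + y) <= P).
    { unfold P. eapply Rle_trans; [apply Rabs_triang|]. lra. }
    assert ((x + y) ^ 2 <= P ^ 2).
    { rewrite <- (pow2_abs (x + y)). apply pow_incr. split; [apply Rabs_pos|auto]. }
    replace ((x ^ 2 - y ^ 2) ^ 2) with ((x + y) ^ 2 * (x - y) ^ 2) by ring.
    apply Rmult_le_compat_r; [apply pow2_ge_0|auto]. }
  eapply Rle_trans; [apply Rmult_le_compat_l; [apply pow2_ge_0|apply Sm_diff_sq]|].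
  assert (HE := Em_bound m).
  assert (HN : 0 <= INR N) by apply pos_INR.
  assert (P ^ 2 <= (2 * Dc * delta * q ^ S m) ^ 2) by (apply pow_incr; lra).
  assert (0 <= Em N a b m) by (apply rsum_nonneg; intros; destruct (ind N m k); [unfold cabs2; nra|lra]).
  eapply Rle_trans.
  { apply Rmult_le_compat; [apply pow2_ge_0| apply Rmult_le_pos; auto | exact H |].
    apply Rmult_le_compat_l; [auto|exact HE]. }
  right. transitivity (INR N * (2304 * Dc ^ 2 * delta ^ 4) * (q ^ 4 * rho4 ^ m)); [|ring]. rewrite <- pow_id. assert (0 < 2 ^ m) by (apply pow_lt; lra). field. lra.
Qed.

Lemma rho4_lt : q ^ 4 < 2 -> 0 <= rho4 < tt /\ tt < 1.
Proof. intros H. unfold tt, rho4. assert (0 <= q ^ 4) by (apply pow_le; lra). lra. Qed.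

Lemma L4_main : q ^ 4 < 2 -> (1 <= N)%nat ->
  rsum N (fun j => xofz N (ap a) b j ^ 4) <=
  INR N * (2 * (2304 * Dc ^ 2 * q ^ 4) / ((1 - tt) * (1 - rho4 / tt)) + 2) * delta ^ 4.
Proof.
  intros Hq4 HN1. destruct (rho4_lt Hq4) as [[Hr0 Hrt] Ht1].
  assert (Htp : 0 < tt) by lra.
  set (K1 := 2304 * Dc ^ 2 * delta ^ 4 * q ^ 4).
  set (f := fun m j => Sm N a b (S m) j ^ 2 - Sm N a b m j ^ 2).
  assert (Htel : forall j, Sm N a b N j ^ 2 - Sm N a b 0 j ^ 2 = rsum N (fun m => f m j)).
  { intros j. unfold f. rewrite (rsum_telescope N (fun m => Sm N a b m j ^ 2)). reflexivity. }
  assert (Hsq : rsum N (fun j => (Sm N a b N j ^ 2 - Sm N a b 0 j ^ 2) ^ 2)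
                <= / (1 - tt) * (INR N * K1 * / (1 - rho4 / tt))).
  { eapply Rle_trans with (rsum N (fun j => rsum N (fun m => tt ^ m) * rsum N (fun m => f m j ^ 2 / tt ^ m))).
    { apply rsum_le; intros j _. rewrite Htel. apply wcs. intros; apply pow_lt; lra. }
    rewrite rsum_scal, rsum_swap.
    assert (HW := geom_bound N tt ltac:(lra)).
    assert (HS : rsum N (fun m => rsum N (fun j => f m j ^ 2 / tt ^ m)) <= INR N * K1 * / (1 - rho4 / tt)).
    { eapply Rle_trans with (rsum N (fun m => INR N * K1 * (rho4 / tt) ^ m)).
      - apply rsum_le; intros m _.
        rewrite (rsum_ext _ _ (fun j => / tt ^ m * f m j ^ 2)) by (intros; unfold Rdiv; ring).
        rewrite rsum_scal. assert (H := fm_bound m). fold (f m) in H.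
        change (rsum N (fun j => f m j ^ 2)) with (rsum N (fun j => (fun j => f m j) j ^ 2)).
        unfold f in H |- *.
        assert (0 < tt ^ m) by (apply pow_lt; lra).
        eapply Rle_trans; [apply Rmult_le_compat_l; [left; apply Rinv_0_lt_compat; auto|exact H]|].
        right. unfold K1, Rdiv. rewrite Rpow_mult_distr, pow_inv. field. lra.
      - rewrite rsum_scal. apply Rmult_le_compat_l.
        + unfold K1. assert (0 <= INR N) by apply pos_INR. assert (0 <= Dc ^ 2) by apply pow2_ge_0.
          assert (0 <= delta ^ 4) by (apply pow_le; lra). assert (0 <= q ^ 4) by (apply pow_le; lra).
          apply Rmult_le_pos; auto. apply Rmult_le_pos; [apply Rmult_le_pos|]; auto. apply Rmult_le_pos; auto. lra.
        + apply geom_bound. split. unfold Rdiv; apply Rmult_le_pos; [lra|left; apply Rinv_0_lt_compat; lra]. apply (Rmult_lt_reg_r tt); [lra|].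
          unfold Rdiv; rewrite Rmult_assoc, Rinv_l; lra. }
    assert (0 <= rsum N (fun m => rsum N (fun j => f m j ^ 2 / tt ^ m))).
    { apply rsum_nonneg; intros; apply rsum_nonneg; intros. apply Rmult_le_pos; [apply pow2_ge_0|].
      left; apply Rinv_0_lt_compat, pow_lt; lra. }
    eapply Rle_trans; [apply Rmult_le_compat_r; [auto|exact HW]|].
    apply Rmult_le_compat_l; [left; apply Rinv_0_lt_compat; lra|auto]. }
  eapply Rle_trans with (rsum N (fun j => 2 * (Sm N a b N j ^ 2 - Sm N a b 0 j ^ 2) ^ 2 + 2 * delta ^ 4)).
  { apply rsum_le; intros j _. rewrite <- Sm_N.
    assert (H0 : Rabs (Sm N a b 0 j) <= delta) by (eapply Rle_trans; [apply Sm_sup|auto]).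
    set (x := Sm N a b N j). set (y := Sm N a b 0 j) in *.
    assert (y ^ 2 <= delta ^ 2) by (rewrite <- (pow2_abs y); apply pow_incr; split; [apply Rabs_pos|auto]).
    assert (0 <= y ^ 2) by apply pow2_ge_0.
    assert (y ^ 4 <= delta ^ 4) by (replace (y^4) with ((y^2)^2) by ring; replace (delta^4) with ((delta^2)^2) by ring; apply pow_incr; lra).
    assert (0 <= (x^2 - 2 * y^2)^2) by apply pow2_ge_0.
    nra. }
  rewrite rsum_plus, rsum_scal, rsum_const.
  assert (0 <= INR N) by apply pos_INR.
  replace (INR N * (2 * (2304 * Dc ^ 2 * q ^ 4) / ((1 - tt) * (1 - rho4 / tt)) + 2) * delta ^ 4)
    with (2 * (/ (1 - tt) * (INR N * K1 * / (1 - rho4 / tt))) + INR N * (2 * delta ^ 4)).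
  2: { unfold K1. assert (rho4 / tt < 1). { apply (Rmult_lt_reg_r tt); [lra|]. unfold Rdiv; rewrite Rmult_assoc, Rinv_l; lra. } field. repeat split; lra. }
  lra.
Qed.
End Bounds.

Lemma cube_bound y d : 0 < d -> Rabs (- y ^ 3 + / 4 * y ^ 4) <= (3 / (4 * d) + / 4) * y ^ 4 + d ^ 3 / 4.
Proof. intros Hd. set (v := Rabs y).
  assert (Hv : 0 <= v) by apply Rabs_pos.
  assert (E3 : Rabs (y ^ 3) = v ^ 3) by (unfold v; rewrite <- RPow_abs; reflexivity).
  assert (E4 : y ^ 4 = v ^ 4) by (replace (y^4) with ((y^2)^2) by ring; replace (v^4) with ((v^2)^2) by ring; unfold v; rewrite pow2_abs; reflexivity).
  eapply Rle_trans; [apply Rabs_triang|]. rewrite Rabs_Ropp, E3, Rabs_mult, Rabs_pos_eq by lra.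
  rewrite Rabs_pos_eq by (rewrite E4; apply pow_le; auto). rewrite E4.
  assert (H : v ^ 3 * d <= 3 / 4 * v ^ 4 + d ^ 4 / 4).
  { assert (0 <= (v - d) ^ 2 * (3 * v ^ 2 + 2 * v * d + d ^ 2)).
    { apply Rmult_le_pos; [apply pow2_ge_0|]. nra. }
    nra. }
  assert (v ^ 3 <= 3 / (4 * d) * v ^ 4 + d ^ 3 / 4).
  { apply (Rmult_le_reg_r d); [auto|]. replace ((3 / (4 * d) * v ^ 4 + d ^ 3 / 4) * d) with (3 / 4 * v ^ 4 + d ^ 4 / 4) by (field; lra). auto. }
  lra.
Qed.

Theorem lemma4p11 :
  forall (mu alpha : R), 1 < mu -> 0 < alpha < / 4 ->
  exists (A9 delta0 : R), 0 < delta0 /\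
    forall (N : nat) (delta : R) (a b : nat -> R),
      (3 <= N)%nat -> 0 < delta < delta0 ->
      Cdelta (mu * gamma1 N) alpha delta N a b ->
      Rabs (Rem (mu * gamma1 N) N a b) <= A9 * delta ^ 3.
Proof.
  intros mu alpha Hmu Hal.
  set (q := Rpower 2 alpha).
  set (C4 := 2 * (2304 * Dc q ^ 2 * q ^ 4) / ((1 - tt q) * (1 - rho4 q / tt q)) + 2).
  exists (Rabs C4 + 1), 1. split; [lra|].
  intros N delta a b HN Hd HC.
  assert (Hq := q_gt1 alpha ltac:(lra)). fold q in Hq.
  assert (Hq4 := q_pow4 alpha Hal). fold q in Hq4.
  pose proof HC as [Hh [H0 Hk]].
  assert (HN1 : (1 <= N)%nat) by lia.
  assert (HP0 : Pm N a b 0 <= delta).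
  { rewrite Pm_0 by auto. unfold nz, cabs2, ap. simpl. destruct Hh as [Hb0 _]. rewrite Hb0.
    replace ((a 0%nat + 1) * ((a 0%nat + 1) * 1) + 0 * (0 * 1)) with (Rsqr (a 0%nat + 1)) by (unfold Rsqr; ring).
    rewrite sqrt_Rsqr_abs. eapply Rle_trans; [exact H0|].
    assert (1 <= sqrt 2) by (rewrite <- sqrt_1; apply sqrt_le_1_alt; lra).
    unfold Rdiv. apply (Rmult_le_reg_r (sqrt 2)); [lra|]. rewrite Rmult_assoc, Rinv_l by lra. nra. }
  assert (HL4 := L4_main N a b delta q ltac:(lra) Hq
     (fun m k Hk Hi => nz_bound mu alpha delta N a b m k Hmu ltac:(lra) HN ltac:(lra) HC Hk Hi) HP0 Hq4 HN1).
  fold C4 in HL4.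
  rewrite rem_eq by auto.
  assert (HNr : 0 < INR N) by (apply lt_0_INR; lia).
  rewrite Rabs_mult, Rabs_pos_eq by (left; apply Rinv_0_lt_compat; auto).
  assert (Hs : Rabs (rsum N (fun j => - (xofz N a b j + 1) ^ 3 + / 4 * (xofz N a b j + 1) ^ 4))
     <= (3 / (4 * delta) + / 4) * rsum N (fun j => xofz N (ap a) b j ^ 4) + INR N * (delta ^ 3 / 4)).
  { eapply Rle_trans; [apply rsum_abs|]. rewrite <- rsum_scal, <- rsum_const, <- rsum_plus.
    apply rsum_le; intros j _. rewrite xofz_ap by auto. apply cube_bound; lra. }
  assert (0 <= delta ^ 4 <= delta ^ 3).
  { split. apply pow_le; lra. replace (delta^4) with (delta * delta^3) by ring.
    assert (0 <= delta ^ 3) by (apply pow_le; lra). nra. }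
  assert (Hsum : (3 / (4 * delta) + / 4) * rsum N (fun j => xofz N (ap a) b j ^ 4)
          <= (3 / (4 * delta) + / 4) * (INR N * C4 * delta ^ 4)).
  { apply Rmult_le_compat_l; [|exact HL4]. assert (0 < 3 / (4 * delta)) by (apply Rdiv_lt_0_compat; lra). lra. }
  replace ((3 / (4 * delta) + / 4) * (INR N * C4 * delta ^ 4))
     with (INR N * (3 / 4 * C4 * delta ^ 3 + / 4 * C4 * delta ^ 4)) in Hsum by (simpl; field; lra).
  apply (Rmult_le_reg_l (INR N)); [auto|]. rewrite <- Rmult_assoc, Rinv_r, Rmult_1_l by lra.
  eapply Rle_trans; [exact Hs|].
  assert (C4 <= Rabs C4) by apply Rle_abs. assert (- Rabs C4 <= C4) by (apply Ropp_le_cancel; rewrite Ropp_involutive; rewrite <- Rabs_Ropp; apply Rle_abs).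
  assert (0 <= delta ^ 3) by (apply pow_le; lra).
  assert (C4 * delta ^ 4 <= Rabs C4 * delta ^ 3).
  { destruct (Rle_dec 0 C4). - rewrite Rabs_pos_eq by auto. nra. - nra. }
  assert (C4 * delta ^ 3 <= Rabs C4 * delta ^ 3) by nra.
  nra.
Qed.
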